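(* Let $\widehat{A}=A+\epsilon B$ and $\widehat{C}=C+\epsilon D$ with $A,B,C,D\in\mathbb{R}^{n\times n}$ be such that the dual Drazin generalized inverses of $\widehat{A}$, $\widehat{C}$ and $\widehat{A}\widehat{C}$ exist and have the particular form $\widehat{A}^{D}=A^{D}-\epsilon A^{D}BA^{D}$, $\widehat{C}^{D}=C^{D}-\epsilon C^{D}DC^{D}$, $(\widehat{A}\widehat{C})^{D}=(AC)^{D}-\epsilon (AC)^{D}(AD+BC)(AC)^{D}$. If $AC=CA$, $C^{D}B=BC^{D}$ and $A^{D}D=DA^{D}$, then $(\widehat{A}\widehat{C})^{D}=\widehat{A}^{D}\widehat{C}^{D}=\widehat{C}^{D}\widehat{A}^{D}$.
   Context: A dual number is $a+\epsilon b$ with $a,b\in\mathbb{R}$, where $\epsilon\neq 0$, $\epsilon^2=0$ and $\epsilon$ commutes with reals. A dual matrix is $A+\epsilon B$ with $A,B$ real; sums and products are computed formally using $\epsilon^2=0$, and equality means equality of real and dual parts. $\mathbb{D}^n$ is the set of dual column vectors of length $n$; the dual index $Ind(\widehat{A})$ of a square dual matrix is the smallest nonnegative integer $k$ with $\{\widehat{A}^k\widehat{z}:\widehat{z}\in\mathbb{D}^n\}=\{\widehat{A}^{k+1}\widehat{z}:\widehat{z}\in\mathbb{D}^n\}$. $A^D$ denotes the Drazin inverse of a real square matrix $A$. For $Ind(\widehat{A})=k$, the dual Drazin generalized inverse $\widehat{A}^D$ is the dual matrix $\widehat{X}$ (if it exists) with $\widehat{A}^{k}\widehat{X}\widehat{A}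 = \widehat{A}^{k}$, $\widehat{X}\widehat{A}\widehat{X} = \widehat{X}$, $\widehat{A}\widehat{X} =\widehat{X}\widehat{A}$. *)

(* Defs.v *)
From mathcomp Require Import all_boot all_order all_algebra.
Set Implicit Arguments. Unset Strict Implicit. Unset Printing Implicit Defensive.
Import GRing.Theory Num.Theory.
Local Open Scope ring_scope.

Definition mxpow (R : realFieldType) (n : nat) (A : 'M[R]_n) (k : nat) : 'M[R]_n :=
  iter k (mulmx A) 1%:M.

Definition mx_range_stable (R : realFieldType) (n : nat) (A : 'M[R]_n) (k : nat) :=
  forall w : 'cV[R]_n,
    (exists z, w = mxpow A k *m z) <-> (exists z, w = mxpow A k.+1 *m z).

Definition is_mx_index (R : realFieldType) (n : nat) (A : 'M[R]_n) (k : nat) :=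
  mx_range_stable A k /\ forall j, (j < k)%N -> ~ mx_range_stable A j.

Definition is_drazin (R : realFieldType) (n : nat) (A X : 'M[R]_n) :=
  exists k, is_mx_index A k /\
    mxpow A k *m X *m A = mxpow A k /\ X *m A *m X = X /\ A *m X = X *m A.

(* Dual matrices A + eps B represented as pairs (A, B); eps^2 = 0. *)
Definition dmx (R : realFieldType) (n : nat) := ('M[R]_n * 'M[R]_n)%type.

Definition dmul (R : realFieldType) (n : nat) (X Y : dmx R n) : dmx R n :=
  (X.1 *m Y.1, X.1 *m Y.2 + X.2 *m Y.1).

Definition dunit (R : realFieldType) (n : nat) : dmx R n := (1%:M, 0).

Definition dpow (R : realFieldType) (n : nat) (X : dmx R n) (k : nat) : dmx R n :=
  iter k (dmul X) (dunit R n).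

(* Dual vectors a + eps b, as pairs of real column vectors. *)
Definition dvec (R : realFieldType) (n : nat) := ('cV[R]_n * 'cV[R]_n)%type.

Definition dapply (R : realFieldType) (n : nat) (X : dmx R n) (z : dvec R n) : dvec R n :=
  (X.1 *m z.1, X.1 *m z.2 + X.2 *m z.1).

Definition dual_range_stable (R : realFieldType) (n : nat) (X : dmx R n) (k : nat) :=
  forall w : dvec R n,
    (exists z, w = dapply (dpow X k) z) <-> (exists z, w = dapply (dpow X k.+1) z).

Definition is_dual_index (R : realFieldType) (n : nat) (X : dmx R n) (k : nat) :=
  dual_range_stable X k /\ forall j, (j < k)%N -> ~ dual_range_stable X j.

Definition is_dual_drazin (R : realFieldType) (n : nat) (X Y : dmx R n) :=
  exists k, is_dual_index X k /\
    dmul (dmul (dpow X k) Y) X = dpow X k /\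
    dmul (dmul Y X) Y = Y /\
    dmul X Y = dmul Y X.

(* Main.v *)
Require Import Defs.
From mathcomp Require Import all_boot all_order all_algebra.
Import GRing.Theory Num.Theory.
Local Open Scope ring_scope.

Set Implicit Arguments.
Section Gen.
Variable T : pzRingType.

Definition drz (a x : T) k := a ^+ k * x * a = a ^+ k /\ x * a * x = x /\ a * x = x * a.

Lemma drz_up a x k j : drz a x k -> drz a x (j + k).
Proof.
move=> [h1 [h2 h3]]; split=> //.
by rewrite exprD -!mulrA (mulrA (a ^+ k)) h1.
Qed.

Lemma drz_idem a x k : drz a x k -> forall j, (x * a) ^+ j.+1 = x * a.
Proof.
move=> [h1 [h2 h3]]; elim=> // j IH.
by rewrite exprS IH mulrA h2.
Qed.

Lemma drz_xpow a x k : drz a x k -> forall j, (x * a) ^+ j.+1 = x ^+ j.+1 * a ^+ j.+1.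
Proof.
move=> [h1 [h2 h3]] j; rewrite exprMn_comm //.
Qed.

Lemma drz_x a x k : drz a x k -> x = x ^+ k.+1 * a ^+ k.
Proof.
move=> d; have [h1 [h2 h3]] := d.
have e : forall j, (x * a) ^+ j * x = x.
  by elim=> [|j IH]; rewrite ?expr0 ?mul1r // exprSr -mulrA h2 IH.
have cx : GRing.comm x (a ^+ k) by apply: commrX.
by rewrite -{1}(e k) exprMn_comm // -mulrA -cx mulrA -exprSr.
Qed.

Lemma drz_x' a x k : drz a x k -> x = a ^+ k * x ^+ k.+1.
Proof.
move=> d; have [h1 [h2 h3]] := d.
rewrite {1}(drz_x d); apply: commrX; apply: commr_sym; apply: commrX; exact: h3.
Qed.

Lemma drz_a a x k : drz a x k -> a ^+ k = a ^+ k.+1 * x.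
Proof.
move=> [h1 [h2 h3]]; by rewrite -{1}h1 -mulrA -h3 mulrA -exprSr.
Qed.

Lemma drz_a' a x k : drz a x k -> a ^+ k = x * a ^+ k.+1.
Proof.
move=> d; rewrite {1}(drz_a d); have [h1 [h2 h3]] := d.
by apply: commr_sym; apply: commrX.
Qed.

Lemma drz_unique a x y k l : drz a x k -> drz a y l -> x = y.
Proof.
move=> dx dy.
have dx' := drz_up l dx; have dy' := drz_up k dy.
rewrite addnC in dy'.
set m := (l + k)%N in dx' dy'.
have ex : x = x * a * y.
  by rewrite {1}(drz_x dx') (drz_a dy') mulrA -(drz_xpow dx') (drz_idem dx').
have ey : y = x * a * y.
  rewrite {1}(drz_x' dy') (drz_a' dx') -!mulrA; congr (_ * _).
  have [_ [_ h3]] := dy'.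
  by rewrite -exprMn_comm // h3 (drz_idem dy').
by rewrite ex -ey.
Qed.

Lemma drz_comm a x k c : drz a x k -> GRing.comm a c -> GRing.comm x c.
Proof.
move=> d ac; have [h1 [h2 h3]] := d.
have cak : GRing.comm (a ^+ k) c by apply: commr_sym; apply: commrX; apply: commr_sym.
have cak1 : GRing.comm (a ^+ k.+1) c by apply: commr_sym; apply: commrX; apply: commr_sym.
have e1 : x * c = x * a * c * x.
  transitivity (x ^+ k.+1 * (c * a ^+ k.+1) * x).
    by rewrite {1}(drz_x d) -mulrA cak (drz_a d) !mulrA.
  by rewrite -cak1 !mulrA -(drz_xpow d) (drz_idem d).
have e2 : c * x = x * c * (a * x).
  transitivity (x * (a ^+ k.+1 * c) * x ^+ k.+1).
    by rewrite {1}(drz_x' d) mulrA -cak (drz_a' d) !mulrA.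
  by rewrite cak1 -!mulrA -(exprMn_comm _ h3) h3 (drz_idem d) !mulrA.
by rewrite /GRing.comm e1 e2 -(mulrA x a c) ac !mulrA.
Qed.
End Gen.
Arguments drz {T}.
Lemma drz_mul (T : pzRingType) (a c x y : T) k l :
  GRing.comm a c -> drz a x k -> drz c y l -> drz (a * c) (x * y) (l + k).
Proof.
move=> ac dx dy.
have xc := drz_comm dx ac.
have ya := drz_comm dy (commr_sym ac).
have yx := drz_comm dy (commr_sym xc).
have dx' := drz_up l dx; have dy' := drz_up k dy.
rewrite addnC in dy'.
set m := (l + k)%N in dx' dy' *.
have [h1 [h2 h3]] := dx'; have [g1 [g2 g3]] := dy'.
have cxm : GRing.comm (c ^+ m) x by apply: commr_sym; apply: commrX.
have cam : GRing.comm (c ^+ m) a by apply: commr_sym; apply: commrX; apply: commr_sym.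
split; [|split].
- rewrite exprMn_comm // -!mulrA (mulrA (c ^+ m) x) cxm -(mulrA x).
  rewrite (mulrA y a) ya -(mulrA a y c) (mulrA (c ^+ m) a) cam -(mulrA a).
  rewrite !mulrA h1 -!mulrA (mulrA (c ^+ m) y c) g1.
  done.
- rewrite -!mulrA (mulrA y a) ya -(mulrA a y) (mulrA c x) -xc -(mulrA x c y).
  rewrite (mulrA y x) yx -(mulrA x y) !mulrA h2 -!mulrA (mulrA y c y) g2 //.
- rewrite -!mulrA (mulrA c x) -xc -(mulrA x c y) g3 (mulrA a x) h3 -!mulrA (mulrA y a) ya -!mulrA //.
Qed.

Lemma swap_r (T : pzRingType) (y z w : T) : GRing.comm y z -> y * (z * w) = z * (y * w).
Proof. by move=> yz; rewrite mulrA yz -mulrA. Qed.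

Lemma final (T : pzRingType) (A B C D a c : T) :
  GRing.comm a c -> GRing.comm A c -> GRing.comm a C -> a * A * a = a ->
  c * C * c = c -> a * D = D * a -> c * B = B * c ->
  ( -(a * c * (A * D + B * C) * (a * c)) = a * (-(c * D * c)) + -(a * B * a) * c ) /\
  ( a * (-(c * D * c)) + -(a * B * a) * c = c * (-(a * B * a)) + -(c * D * c) * a ).
Proof.
move=> ac Ac aC h2 g2 aD cB.
have E1 : a * c * (A * D) * (a * c) = a * (c * D * c).
  rewrite -!mulrA (swap_r _ (commr_sym Ac)) (swap_r _ (esym aD)) (swap_r _ (commr_sym ac)).
  by rewrite (mulrA a A) (mulrA (a * A) a) h2.
have E2 : a * c * (B * C) * (a * c) = a * B * a * c.
  rewrite -!mulrA (swap_r _ cB) (swap_r _ (commr_sym aC)) (swap_r _ (commr_sym ac)).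
  by rewrite (mulrA c C c) g2 !mulrA.
have E3 : a * (c * D * c) = c * D * c * a.
  rewrite -!mulrA (swap_r _ ac) (swap_r _ aD) ac //.
have E4 : a * B * a * c = c * (a * B * a).
  rewrite -!mulrA ac (swap_r _ (esym cB)) (swap_r _ ac) //.
split.
  by rewrite mulrDr mulrDl opprD E1 E2 mulrN mulNr.
by rewrite !mulrN !mulNr E3 E4 addrC.
Qed.

Lemma mxpowE (R : realFieldType) (n : nat) (A : 'M[R]_n) k : mxpow A k = A ^+ k.
Proof.
elim: k => [|k IH]; first by rewrite expr0.
by rewrite /mxpow iterS -/(mxpow A k) IH exprS mulmxE.
Qed.

Lemma drzE (R : realFieldType) (n : nat) (A X : 'M[R]_n) :
  is_drazin A X -> exists k, drz A X k.
Proof.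
move=> [k [_ [h1 [h2 h3]]]]; exists k.
by move: h1 h2 h3; rewrite !mxpowE !mulmxE.
Qed.

Theorem mainTheorem7 (R : realFieldType) (n : nat)
  (A B C D AD CD ACD : 'M[R]_n) :
  is_drazin A AD -> is_drazin C CD -> is_drazin (A *m C) ACD ->
  is_dual_drazin (A, B) (AD, - (AD *m B *m AD)) ->
  is_dual_drazin (C, D) (CD, - (CD *m D *m CD)) ->
  is_dual_drazin (dmul (A, B) (C, D))
                 (ACD, - (ACD *m (A *m D + B *m C) *m ACD)) ->
  A *m C = C *m A -> CD *m B = B *m CD -> AD *m D = D *m AD ->
  (ACD, - (ACD *m (A *m D + B *m C) *m ACD))
    = dmul (AD, - (AD *m B *m AD)) (CD, - (CD *m D *m CD)) /\
  dmul (AD, - (AD *m B *m AD)) (CD, - (CD *m D *m CD))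
    = dmul (CD, - (CD *m D *m CD)) (AD, - (AD *m B *m AD)).
Proof.
move=> /drzE [k1 dA] /drzE [k2 dC] /drzE [k3 dAC] _ _ _.
rewrite /dmul /= !mulmxE => AC cB aD.
have dP := drz_mul AC dA dC.
have -> := drz_unique dAC dP.
have CDA := drz_comm dC (commr_sym AC).
have ADC := drz_comm dA AC.
have acomm := drz_comm dA (commr_sym CDA).
have [_ [hA _]] := dA; have [_ [hC _]] := dC.
have [F1 F2] := @final _ A B C D AD CD acomm (commr_sym CDA) ADC hA hC aD cB.
by rewrite F1 F2 acomm.
Qed.
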